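(* Let $(\mathcal V,\mathcal W,\lambda)$ be a FTvN system and $x,y\in\mathcal V$. Then: (a) $x\prec y$ implies $\langle c,x\rangle\le\langle\lambda(c),\lambda(y)\rangle$ for all $c\in\mathcal V$; the reverse implication holds if $\mathcal V$ is finite dimensional. (b) $x\prec y$ implies $\langle\lambda(c),\lambda(x)\rangle\le\langle\lambda(c),\lambda(y)\rangle$ for all $c\in\mathcal V$; the reverse implication holds if $\mathcal V$ is finite dimensional. (c) $x\prec y$ and $y\prec x$ if and only if $[x]=[y]$.
   Context: A Fan-Theobald-von Neumann (FTvN) system is a triple $(\mathcal V,\mathcal W,\lambda)$ where $\mathcal V,\mathcal W$ are real inner product spaces and $\lambda:\mathcal V\to\mathcal W$ is a map such that: (A1) $\|\lambda(x)\|=\|x\|$ for all $x$; (A2) $\langle x,y\rangle\le\langle\lambda(x),\lambda(y)\rangle$ for all $x,y$; (A3) for every $c\in\mathcal V$ and $q\in\lambda(\mathcal V)$ there exists $x$ with $\lambda(x)=q$ and $\langle c,x\rangle=\langle\lambda(c),\lambda(x)\rangle$. The $\lambda$-orbit of $u$ is $[u]=\{z\in\mathcal V:\lambda(z)=\lambda(u)\}$. Majorization: $x\prec y$ means $x\in\operatorname{conv}[y]$ (convex hull, not closure). *)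

(* Defs.v *)
From HB Require Import structures.
From mathcomp Require Import all_boot all_order all_algebra.
From mathcomp Require Import reals.
Set Implicit Arguments. Unset Strict Implicit. Unset Printing Implicit Defensive.
Import Order.TTheory GRing.Theory Num.Theory.
Local Open Scope ring_scope.

Record inner_product (R : realType) (V : lmodType R) := InnerProduct {
  ip : V -> V -> R;
  ip_sym : forall x y, ip x y = ip y x;
  ip_linear : forall (a : R) (x y z : V), ip (a *: x + y) z = a * ip x z + ip y z;
  ip_pos : forall x, x != 0 -> 0 < ip x x
}.

Definition ipnorm (R : realType) (V : lmodType R) (I : inner_product V) (x : V) : R :=
  Num.sqrt (ip I x x).

Definition FTvN (R : realType) (V W : lmodType R)
  (IV : inner_product V) (IW : inner_product W) (lam : V -> W) : Prop :=
  [/\ (forall x, ipnorm IW (lam x) = ipnorm IV x),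
      (forall x y, ip IV x y <= ip IW (lam x) (lam y)) &
      (forall (c : V) (q : W), (exists u, lam u = q) ->
         exists x, lam x = q /\ ip IV c x = ip IW (lam c) (lam x))].

Definition lorbit (R : realType) (V W : lmodType R) (lam : V -> W) (u : V) : V -> Prop :=
  fun z => lam z = lam u.

(* convex hull (finite convex combinations; no closure) *)
Definition conv_hull (R : realType) (V : lmodType R) (S : V -> Prop) : V -> Prop :=
  fun x => exists (n : nat) (a : 'I_n -> R) (z : 'I_n -> V),
    [/\ (forall i, 0 <= a i), \sum_(i < n) a i = 1, (forall i, S (z i)) &
        x = \sum_(i < n) a i *: z i].

Definition majorized (R : realType) (V W : lmodType R) (lam : V -> W) (x y : V) : Prop :=
  conv_hull (lorbit lam y) x.

Definition finite_dim (R : realType) (V : lmodType R) : Prop :=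
  exists (n : nat) (b : 'I_n -> V), forall v : V,
    exists a : 'I_n -> R, v = \sum_(i < n) a i *: b i.

(* Main.v *)
Require Import Defs.
From mathcomp Require Import all_boot all_order all_algebra.
From mathcomp Require Import reals.
Import Order.TTheory GRing.Theory Num.Theory.
Local Open Scope ring_scope.

From HB Require Import structures.
From mathcomp Require Import all_classical all_reals all_analysis.
From mathcomp Require Import ring lra.
Set Implicit Arguments. Unset Strict Implicit. Unset Printing Implicit Defensive.
Import Order.TTheory GRing.Theory Num.Theory.
Import numFieldNormedType.Exports.
Local Open Scope classical_set_scope.
Local Open Scope ring_scope.

Section IP.
Variables (R : realType) (V : lmodType R) (I : inner_product V).
Local Notation ip := (ip I).

Lemma ipDl x y z : ip (x + y) z = ip x z + ip y z.
Proof. by have := ip_linear I 1 x y z; rewrite scale1r mul1r. Qed.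
Lemma ip0l z : ip 0 z = 0.
Proof. have := ip_linear I 1 0 0 z; rewrite scale1r addr0 mul1r => /eqP. by rewrite -subr_eq subrr eq_sym => /eqP. Qed.
Lemma ipZl a x z : ip (a *: x) z = a * ip x z.
Proof. by have := ip_linear I a x 0 z; rewrite addr0 ip0l addr0. Qed.
Lemma ipNl x z : ip (- x) z = - ip x z.
Proof. by rewrite -scaleN1r ipZl mulN1r. Qed.
Lemma ipBl x y z : ip (x - y) z = ip x z - ip y z.
Proof. by rewrite ipDl ipNl. Qed.
Lemma ipDr x y z : ip z (x + y) = ip z x + ip z y.
Proof. by rewrite ip_sym ipDl !(ip_sym I z). Qed.
Lemma ipZr a x z : ip z (a *: x) = a * ip z x.
Proof. by rewrite ip_sym ipZl (ip_sym I z). Qed.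
Lemma ip0r z : ip z 0 = 0.
Proof. by rewrite ip_sym ip0l. Qed.
Lemma ipNr x z : ip z (- x) = - ip z x.
Proof. by rewrite ip_sym ipNl ip_sym. Qed.
Lemma ipBr x y z : ip z (x - y) = ip z x - ip z y.
Proof. by rewrite ipDr ipNr. Qed.
Lemma ip_suml n (F : 'I_n -> V) z : ip (\sum_(i < n) F i) z = \sum_(i < n) ip (F i) z.
Proof. by elim/big_rec2: _ => [|i a b _ <-]; rewrite ?ip0l ?ipDl. Qed.
Lemma ip_sumr n (F : 'I_n -> V) z : ip z (\sum_(i < n) F i) = \sum_(i < n) ip z (F i).
Proof. by rewrite ip_sym ip_suml; apply: eq_bigr => i _; rewrite ip_sym. Qed.
Lemma ip_ge0 x : 0 <= ip x x.
Proof. have [->|h] := eqVneq x 0; first by rewrite ip0l. exact: ltW (ip_pos I h). Qed.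
Lemma ip_eq0 x : ip x x <= 0 -> x = 0.
Proof. move=> h; apply/eqP/negP => /negP h2. by have := ip_pos I h2; rewrite ltNge h. Qed.
End IP.


Lemma sum_delta (R : ringType) d (F : 'I_d -> R) k :
  \sum_(i < d) F i * (i == k)%:R = F k.
Proof.
rewrite (bigD1 k) //= eqxx mulr1 big1 ?addr0 // => i /negbTE ->; by rewrite mulr0.
Qed.

Lemma unlift_widen d (i : 'I_d) : unlift ord_max (widen_ord (leqnSn d) i) = Some i.
Proof.
have -> : widen_ord (leqnSn d) i = lift ord_max i by by apply: val_inj; rewrite /= /bump leqNgt ltn_ord.
by rewrite liftK.
Qed.

Section GS.
Variables (R : realType) (V : lmodType R) (I : inner_product V).
Local Notation ip := (ip I).

Definition orthonorm d (e : 'I_d -> V) := forall i j, ip (e i) (e j) = (i == j)%:R.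

Lemma gram_schmidt n (b : 'I_n -> V) : exists d (e : 'I_d -> V),
  orthonorm e /\ forall j, b j = \sum_(i < d) ip (b j) (e i) *: e i.
Proof.
elim: n b => [|n IH] b.
  by exists 0%N, (fun i : 'I_0 => 0); split => [[]|[]].
have [d [e [on he]]] := IH (fun j : 'I_n => b (widen_ord (leqnSn n) j)).
set bl := b ord_max.
set r := bl - \sum_(i < d) ip bl (e i) *: e i.
have rek k : ip r (e k) = 0.
  rewrite ipBl ip_suml.
  under eq_bigr do rewrite ipZl on.
  by rewrite sum_delta subrr.
have ekr k : ip (e k) r = 0 by rewrite ip_sym rek.
have old j : b (widen_ord (leqnSn n) j) = \sum_(i < d) ip (b (widen_ord (leqnSn n) j)) (e i) *: e i := he j.
have [r0|rn0] := eqVneq r 0.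
  exists d, e; split => // j.
  case: (unliftP ord_max j) => [j'|] ->.
    have -> : lift ord_max j' = widen_ord (leqnSn n) j'.
      by apply: val_inj; rewrite /= /bump leqNgt ltn_ord.
    exact: old.
  by apply/eqP; rewrite -subr_eq0 -/bl; apply/eqP.
set s := Num.sqrt (ip r r).
have rr_gt0 : 0 < ip r r := ip_pos I rn0.
have s_gt0 : 0 < s by rewrite sqrtr_gt0.
set f := s^-1 *: r.
pose e' (i : 'I_d.+1) := if unlift ord_max i is Some k then e k else f.
have ff : ip f f = 1.
  rewrite /f ipZl ipZr mulrA -expr2 exprVn sqr_sqrtr ?ltW //.
  by rewrite mulVf // gt_eqF.
have ef k : ip (e k) f = 0 by rewrite /f ipZr ekr mulr0.
exists d.+1, e'; split.
  move=> i j; rewrite /e'.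
  case: (unliftP ord_max i) => [i'|] ->; case: (unliftP ord_max j) => [j'|] ->.
  - by rewrite on inj_eq //; exact: lift_inj.
  - by rewrite ef eq_sym (negbTE (neq_lift _ _)).
  - by rewrite ip_sym ef (negbTE (neq_lift _ _)).
  - by rewrite ff eqxx.
move=> j; rewrite big_ord_recr /= /e' unlift_none.
under eq_bigr do rewrite unlift_widen.
case: (unliftP ord_max j) => [j'|] ->.
  have -> : lift ord_max j' = widen_ord (leqnSn n) j'.
    by apply: val_inj; rewrite /= /bump leqNgt ltn_ord.
  have hf : ip (b (widen_ord (leqnSn n) j')) f = 0.
    by rewrite (old j') ip_suml big1 // => i _; rewrite ipZl ef mulr0.
  by rewrite hf scale0r addr0; exact: old.
have hbl : bl = \sum_(i < d) ip bl (e i) *: e i + r by rewrite /r addrC subrK.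
rewrite -/bl {1}hbl; congr (_ + _).
have -> : ip bl f = s^-1 * ip r r.
  rewrite /f ipZr; congr (_ * _).
  rewrite {1}hbl ipDl ip_suml big1 ?add0r // => i _.
  by rewrite ipZl ekr mulr0.
rewrite /f scalerA.
have -> : s^-1 * ip r r * s^-1 = 1.
  rewrite mulrC mulrA -expr2 exprVn sqr_sqrtr ?ltW //.
  by rewrite mulVf // gt_eqF.
by rewrite scale1r.
Qed.
End GS.


Section Topo.
Variable R : realType.

Lemma entry_le_norm N (p : 'rV[R]_N) k : `|p 0 k| <= `|p|.
Proof.
have -> : `|p| = mx_norm p by [].
rewrite mx_normrE.
exact: (le_bigmax _ (fun ij : 'I_1 * 'I_N => `|p ij.1 ij.2|) (0, k)).
Qed.

Lemma norm_le_entries N (p : 'rV[R]_N) M : 0 <= M ->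
  (forall k, `|p 0 k| <= M) -> `|p| <= M.
Proof.
move=> M0 h; have -> : `|p| = mx_norm p by [].
rewrite mx_normrE.
apply: bigmax_le => // -[i k] _ /=.
by rewrite (ord1 i).
Qed.

Lemma closed_approx N (A : set 'rV[R]_N) :
  (forall p : 'rV[R]_N, (forall eps, 0 < eps -> exists q : 'rV[R]_N, A q /\ forall k, `|p 0 k - q 0 k| < eps) -> A p) ->
  closed A.
Proof.
move=> H p clp; apply: H => eps e0.
have [q [Aq bq]] := clp _ (nbhsx_ballx p eps e0).
exists q; split => // k.
move: bq; rewrite -ball_normE /ball_ /= => bq.
by apply: le_lt_trans bq; have := entry_le_norm (p - q) k; rewrite !mxE.
Qed.

Lemma cont_entry N (k : 'I_N) : continuous (fun p : 'rV[R]_N => p 0 k).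
Proof. exact: coord_continuous. Qed.

Lemma cont_sum (T : topologicalType) n (G : 'I_n -> T -> R) :
  (forall i, continuous (G i)) -> continuous (fun p => \sum_(i < n) G i p).
Proof.
elim: n G => [|n IH] G hG.
  have -> : (fun p => \sum_(i < 0) G i p) = fun=> 0 by apply: funext => p; rewrite big_ord0.
  exact: cst_continuous.
have -> : (fun p => \sum_(i < n.+1) G i p) =
   (fun p => \sum_(i < n) G (widen_ord (leqnSn n) i) p) + G ord_max.
  by apply: funext => p; rewrite big_ord_recr.
move=> p; apply: continuousD; [exact: IH | exact: hG].
Qed.

End Topo.


Section Coords.
Variables (R : realType) (V : lmodType R) (I : inner_product V).
Variables (d : nat) (e : 'I_d -> V).
Hypothesis on : orthonorm I e.
Hypothesis hexp : forall v, v = \sum_(i < d) ip I v (e i) *: e i.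

Definition T (U : 'I_d -> R) : V := \sum_(j < d) U j *: e j.

Lemma ip_e_T j U : ip I (e j) (T U) = U j.
Proof.
rewrite /T ip_sumr.
under eq_bigr do rewrite ipZr on eq_sym.
exact: sum_delta.
Qed.

Lemma ip_T_T U U' : ip I (T U) (T U') = \sum_(j < d) U j * U' j.
Proof.
rewrite {1}/T ip_suml; apply: eq_bigr => j _.
by rewrite ipZl ip_e_T.
Qed.

Lemma ip_c_T c U : ip I c (T U) = \sum_(j < d) U j * ip I c (e j).
Proof.
rewrite /T ip_sumr; apply: eq_bigr => j _.
by rewrite ipZr.
Qed.

Lemma coordsK v : T (fun j => ip I v (e j)) = v.
Proof. by rewrite /T -hexp. Qed.

End Coords.


Lemma reduce_step (R : realType) (d : nat) (a : 'I_d.+2 -> R) (Z : 'I_d.+2 -> 'I_d -> R) :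
  (forall i, 0 <= a i) -> \sum_i a i = 1 ->
  exists i0 (a' : 'I_d.+2 -> R), [/\ forall i, 0 <= a' i, \sum_i a' i = 1, a' i0 = 0 &
     forall j, \sum_i a' i * Z i j = \sum_i a i * Z i j].
Proof.
move=> a0 a1.
pose M : 'M[R]_(d.+2, d.+1) := \matrix_(i, k) (if unlift ord0 k is Some j then Z i j else 1).
have nf : ~~ row_free M.
  rewrite /row_free; apply/negP => /eqP h.
  by have := rank_leq_col M; rewrite h ltnn.
have kn0 : kermx M != 0 by rewrite kermx_eq0.
have [i1 ri1] : exists i1, row i1 (kermx M) != 0.
  apply/not_existsP => /= h; move/negP: kn0; apply; apply/eqP/row_matrixP => i.
  by rewrite row0; apply/eqP/negPn/negP; apply: h.
set u := row i1 (kermx M) in ri1.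
have uM : u *m M = 0 by rewrite /u -row_mul mulmx_ker row0.
have M0 i : M i ord0 = 1 by rewrite /M mxE unlift_none.
have MZ i j : M i (lift ord0 j) = Z i j by rewrite /M mxE liftK.
have hu k : \sum_i u ord0 i * M i k = 0.
  by have := congr1 (fun A : 'M[R]_(1, d.+1) => A ord0 k) uM; rewrite !mxE.
have hsum : \sum_i u ord0 i = 0.
  by rewrite -[RHS](hu ord0); apply: eq_bigr => i _; rewrite M0 mulr1.
have hZ j : \sum_i u ord0 i * Z i j = 0.
  by rewrite -[RHS](hu (lift ord0 j)); apply: eq_bigr => i _; rewrite MZ.
have [i2 ui2] : exists i, 0 < u ord0 i.
  apply/not_existsP => /= h.
  have hn i : 0 <= - u ord0 i by rewrite oppr_ge0 leNgt; apply/negP; apply: h.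
  have hs : \sum_i - u ord0 i = 0 by rewrite sumrN hsum oppr0.
  move/negP: ri1; apply; apply/eqP/rowP => k; rewrite [RHS]mxE.
  have := (psumr_eq0P (fun i _ => hn i) hs) k isT.
  by move/eqP; rewrite oppr_eq0 => /eqP.
case: (@arg_minP _ R _ i2 (fun i => 0 < u ord0 i) (fun i => a i / u ord0 i) ui2) => i0 ui0 hmin.
set t := a i0 / u ord0 i0.
have t0 : 0 <= t by rewrite /t divr_ge0 // ltW.
exists i0, (fun i => a i - t * u ord0 i); split.
- move=> i; rewrite subr_ge0.
  have [ui|ui] := ltP 0 (u ord0 i).
    by rewrite -ler_pdivlMr //; apply: hmin.
  by apply: le_trans (a0 i); rewrite mulr_ge0_le0.
- by rewrite sumrB -mulr_sumr hsum mulr0 subr0.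
- by rewrite /t divfK ?subrr // gt_eqF.
- move=> j; rewrite (eq_bigr (fun i => a i * Z i j - t * (u ord0 i * Z i j))); last first.
    by move=> i _; rewrite mulrBl mulrA.
  by rewrite sumrB -mulr_sumr hZ mulr0 subr0.
Qed.


Lemma le0_eps (R : realType) (r C : R) : 0 <= C ->
  (forall eps, 0 < eps -> eps <= 1 -> r <= C * eps) -> r <= 0.
Proof.
move=> C0 h; rewrite leNgt; apply/negP => r0.
have d0 : 0 < r + C + 1 by lra.
have e0 : 0 < r / (r + C + 1) by rewrite divr_gt0.
have e1 : r / (r + C + 1) <= 1 by rewrite ler_pdivrMr // mul1r; lra.
have := h _ e0 e1.
rewrite mulrA ler_pdivlMr // => hh.
nra.
Qed.

Lemma abs_le_sq (R : realType) (z : R) : `|z| <= 1 + z ^+ 2.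
Proof.
rewrite -real_normK ?num_real //.
have := normr_ge0 z; set w := `|z|.
move=> w0; nra.
Qed.


Lemma onb_exists (R : realType) (V : lmodType R) (I : inner_product V) :
  finite_dim V -> exists d (e : 'I_d -> V),
    orthonorm I e /\ forall v, v = \sum_(i < d) ip I v (e i) *: e i.
Proof.
move=> [n [b hb]].
have [d [e [on he]]] := gram_schmidt I b.
exists d, e; split => // v.
have [a ->] := hb v.
under [RHS]eq_bigr do rewrite ip_suml scaler_suml.
rewrite exchange_big /=; apply: eq_bigr => j _.
rewrite {1}(he j) scaler_sumr; apply: eq_bigr => i _.
by rewrite ipZl scalerA.
Qed.

Section FT.
Variables (R : realType) (V W : lmodType R) (IV : inner_product V) (IW : inner_product W)
  (lam : V -> W).
Hypothesis Hsys : FTvN IV IW lam.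

Lemma lam_norm a : ip IW (lam a) (lam a) = ip IV a a.
Proof.
case: Hsys => A1 _ _.
have := congr1 (fun t => t ^+ 2) (A1 a); rewrite /ipnorm /=.
by rewrite !sqr_sqrtr ?ip_ge0.
Qed.

Lemma lam_lip a b : ip IW (lam a - lam b) (lam a - lam b) <= ip IV (a - b) (a - b).
Proof.
case: Hsys => _ A2 _.
rewrite !ipBl !ipBr !lam_norm (ip_sym IW (lam b)) (ip_sym IV b).
have := A2 a b; lra.
Qed.
End FT.


Section Rev.
Variables (R : realType) (V W : lmodType R) (IV : inner_product V) (IW : inner_product W)
  (lam : V -> W).
Hypothesis Hsys : FTvN IV IW lam.

Lemma reverse_a x y : finite_dim V ->
  (forall c, ip IV c x <= ip IW (lam c) (lam y)) -> majorized lam x y.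
Proof.
move=> fd H.
have [d [e [on hexp]]] := onb_exists IV fd.
pose X j := ip IV x (e j).
pose wt (p : 'rV[R]_(d.+2 * d.+1)) i := vec_mx p i ord0.
pose cz (p : 'rV[R]_(d.+2 * d.+1)) i j := vec_mx p i (lift ord0 j).
have vecE (p : 'rV[R]_(d.+2 * d.+1)) i k : vec_mx p i k = p ord0 (mxvec_index i k).
  by rewrite -{2}(vec_mxK p) mxvecE.
pose mk (a : 'I_d.+2 -> R) (Z : 'I_d.+2 -> 'I_d -> R) : 'rV[R]_(d.+2 * d.+1) :=
  mxvec (\matrix_(i, k) if unlift ord0 k is Some j then Z i j else a i).
have wt_mk a Z i : wt (mk a Z) i = a i by rewrite /wt /mk mxvecK mxE unlift_none.
have cz_mk a Z i j : cz (mk a Z) i j = Z i j by rewrite /cz /mk mxvecK mxE liftK.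
pose S : set 'rV[R]_(d.+2 * d.+1) := [set p | [/\ forall i, 0 <= wt p i,
   \sum_i wt p i = 1 & forall i, lam (T e (cz p i)) = lam y]].
pose F (p : 'rV[R]_(d.+2 * d.+1)) := \sum_(j < d) (X j - \sum_i wt p i * cz p i j) ^+ 2.
have TB U U' : T e U - T e U' = T e (fun j => U j - U' j).
  by rewrite /T -sumrB; apply: eq_bigr => j _; rewrite scalerBl.
have Snorm p i : S p -> \sum_j cz p i j ^+ 2 = ip IV y y.
  case=> _ _ h; rewrite -(lam_norm Hsys y) -(h i) (lam_norm Hsys) ip_T_T //.
have S0 : S !=set0.
  exists (mk (fun i => (i == ord0)%:R) (fun _ j => ip IV y (e j))); split.
  - by move=> i; rewrite wt_mk ler0n.
  - under eq_bigr do rewrite wt_mk.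
    by rewrite (bigD1 ord0) //= big1 ?addr0 ?eqxx // => i /negbTE ->.
  - move=> i.
    have -> : cz (mk (fun i => (i == ord0)%:R) (fun _ j => ip IV y (e j))) i = fun j => ip IV y (e j).
      by apply: funext => j; rewrite cz_mk.
    by rewrite coordsK.
have wt_le1 p i : S p -> `|wt p i| <= 1.
  case=> h0 h1 _; rewrite ger0_norm // -h1 (bigD1 i) //= lerDl.
  by apply: sumr_ge0 => k _.
have Sb : bounded_set S.
  exists (1 + ip IV y y); split; first by rewrite num_real.
  move=> M hM p Sp /=.
  have Y0 := ip_ge0 IV y.
  apply: norm_le_entries; first by lra.
  move=> k; case: (mxvec_indexP k) => i c; rewrite -vecE.
  case: (unliftP ord0 c) => [j|] ->.
    apply: le_trans (abs_le_sq _) _.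
    have : cz p i j ^+ 2 <= ip IV y y.
      rewrite -(Snorm p i Sp) (bigD1 j) //= lerDl.
      by apply: sumr_ge0 => k' _; exact: sqr_ge0.
    rewrite /cz; lra.
  have := wt_le1 p i Sp; rewrite /wt; lra.
have Scl : closed S.
  apply: closed_approx => p hp; split.
  - move=> i; rewrite -oppr_le0; apply: (@le0_eps _ _ 1) => // eps e0 _.
    have [q [[q0 _ _] hq]] := hp eps e0.
    have := hq (mxvec_index i ord0); rewrite -!vecE -/(wt p i) -/(wt q i).
    have := q0 i; rewrite ltr_norml; lra.
  - apply/eqP; rewrite -subr_eq0 -normr_le0; apply: (@le0_eps _ _ (d.+2)%:R) => // eps e0 _.
    have [q [[_ q1 _] hq]] := hp eps e0.
    rewrite -[X in _ - X]q1 -sumrB.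
    apply: le_trans (ler_norm_sum _ _ _) _.
    apply: le_trans (@ler_sum _ _ _ _ _ (fun=> eps) _) _.
      move=> i _; apply/ltW.
      by have := hq (mxvec_index i ord0); rewrite -!vecE.
    by rewrite sumr_const card_ord mulr_natl.
  - move=> i; apply/eqP; rewrite -subr_eq0; apply/eqP; apply: (@ip_eq0 _ _ IW).
    apply: (@le0_eps _ _ d%:R) => // eps e0 e1.
    have [q [[_ _ qy] hq]] := hp eps e0.
    rewrite -(qy i); apply: le_trans (lam_lip Hsys _ _) _.
    rewrite TB ip_T_T //.
    apply: le_trans (@ler_sum _ _ _ _ _ (fun=> eps) _) _.
      move=> j _ /=.
      have := hq (mxvec_index i (lift ord0 j)); rewrite -!vecE -/(cz p i j) -/(cz q i j).
      set D := cz p i j - cz q i j => hD.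
      rewrite -expr2 -real_normK ?num_real //.
      have := normr_ge0 D; nra.
    by rewrite sumr_const card_ord mulr_natl.
have wtc i : continuous (fun p => wt p i).
  have -> : (fun p => wt p i) = (fun p : 'rV[R]_(d.+2 * d.+1) => p ord0 (mxvec_index i ord0)).
    by apply: funext => p; rewrite /wt vecE.
  exact: cont_entry.
have czc i j : continuous (fun p => cz p i j).
  have -> : (fun p => cz p i j) = (fun p : 'rV[R]_(d.+2 * d.+1) => p ord0 (mxvec_index i (lift ord0 j))).
    by apply: funext => p; rewrite /cz vecE.
  exact: cont_entry.
have Fc : continuous F.
  apply: cont_sum => j.
  pose g (p : 'rV[R]_(d.+2 * d.+1)) := X j - \sum_i wt p i * cz p i j.
  have gc : continuous g.
    have -> : g = (fun=> X j) - (fun p => \sum_i wt p i * cz p i j) by [].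
    move=> p; apply: continuousB.
      exact: cst_continuous.
    apply: cont_sum => i.
    have -> : (fun p => wt p i * cz p i j) = (fun p => wt p i) \* (fun p => cz p i j) by [].
    by move=> q; apply: continuousM; [exact: wtc | exact: czc].
  have -> : (fun p => (X j - \sum_i wt p i * cz p i j) ^+ 2) = g \* g.
    by apply: funext => p; rewrite /= expr2.
  by move=> p; apply: continuousM; exact: gc.
have cF : {within S, continuous F} by apply: continuous_subspaceT.
have [ps psS psmin] := compact_EVT_min S0 (bounded_closed_compact Sb Scl) cF.
have [a0 a1 ay] : S ps := set_mem psS.
have [i0 [a' [a'0 a'1 a'i0 a'Z]]] := reduce_step (cz ps) a0 a1.
pose P j := \sum_i wt ps i * cz ps i j.
pose C j := X j - P j.
have Fps : F ps = \sum_j C j ^+ 2 by [].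
have claim2 U : lam (T e U) = lam y -> \sum_j C j * (U j - P j) <= 0.
  move=> hU.
  pose s := \sum_j C j * (U j - P j).
  pose Q := \sum_j (U j - P j) ^+ 2.
  have Q0 : 0 <= Q by apply: sumr_ge0 => j _; exact: sqr_ge0.
  rewrite leNgt; apply/negP => s0'.
  have s0 : 0 < s := s0'.
  pose t := s / (s + Q).
  have sQ : 0 < s + Q by lra.
  have t0 : 0 < t by rewrite divr_gt0.
  have t1 : t <= 1 by rewrite ler_pdivrMr // mul1r; lra.
  pose a2 i := (1 - t) * a' i + (if i == i0 then t else 0).
  pose Z2 i := if i == i0 then U else cz ps i.
  pose pt := mk a2 Z2.
  have ptS : S pt.
    split.
    - move=> i; rewrite wt_mk /a2; apply: addr_ge0.
        by apply: mulr_ge0 => //; lra.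
      by case: ifP => _ //; exact: ltW.
    - under eq_bigr do rewrite wt_mk.
      rewrite /a2 big_split /= -mulr_sumr a'1 mulr1.
      rewrite (bigD1 i0) //= eqxx big1 ?addr0 => [|i /negbTE -> //].
      by rewrite subrK.
    - move=> i; have -> : cz pt i = Z2 i by apply: funext => j; rewrite cz_mk.
      by rewrite /Z2; case: ifP => _ //; exact: ay.
  have hmin := psmin pt (mem_set ptS).
  have comb j : \sum_i wt pt i * cz pt i j = (1 - t) * P j + t * U j.
    under eq_bigr do rewrite wt_mk cz_mk.
    rewrite (eq_bigr (fun i => (1 - t) * (a' i * cz ps i j) + (if i == i0 then t * U j else 0))).
      rewrite big_split /= -mulr_sumr a'Z; congr (_ + _).
      rewrite (bigD1 i0) //= eqxx big1 ?addr0 //.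
      by move=> i /negbTE ->.
    move=> i _; rewrite /a2 /Z2; case: eqP => [->|_].
      by rewrite a'i0; ring.
    by ring.
  have Fpt : F pt = \sum_j (C j - t * (U j - P j)) ^+ 2.
    by rewrite /F; apply: eq_bigr => j _; rewrite comb /C; congr (_ ^+ 2); ring.
  have expand : \sum_j (C j - t * (U j - P j)) ^+ 2 = \sum_j C j ^+ 2 - 2 * t * s + t ^+ 2 * Q.
    rewrite /s /Q !mulr_sumr -sumrB -big_split; apply: eq_bigr => j _ /=; ring.
  move: hmin; rewrite Fpt expand -Fps => hmin.
  have h1 : 2 * s <= t * Q by nra.
  have h2 : t * Q <= s by rewrite /t mulrAC ler_pdivrMr //; nra.
  lra.
have claim3 : \sum_j C j ^+ 2 <= 0.
  case: Hsys => _ _ A3.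
  have [z [hz hcz]] := A3 (T e C) (lam y) (ex_intro _ y erefl).
  have hc := H (T e C); rewrite -hz -hcz in hc.
  have := claim2 (fun j => ip IV z (e j)); rewrite coordsK // hz => /(_ erefl) h2.
  move: hc; rewrite -{1}(coordsK hexp x) -{1}(coordsK hexp z) !ip_T_T // => hc.
  have E1 : \sum_j C j ^+ 2 = \sum_j C j * X j - \sum_j C j * P j.
    by rewrite -sumrB; apply: eq_bigr => j _; rewrite /C; ring.
  have E2 : \sum_j C j * (ip IV z (e j) - P j) = \sum_j C j * ip IV z (e j) - \sum_j C j * P j.
    by rewrite -sumrB; apply: eq_bigr => j _; ring.
  rewrite E1; rewrite E2 in h2; move: hc h2; rewrite -/X; lra.
have C0 j : C j = 0.
  have hs : \sum_j C j ^+ 2 = 0.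
    by apply/eqP; rewrite eq_le claim3 sumr_ge0 // => k _; exact: sqr_ge0.
  have := (psumr_eq0P (fun k _ => sqr_ge0 (C k)) hs) j isT.
  by move/eqP; rewrite sqrf_eq0 => /eqP.
exists d.+2, (wt ps), (fun i => T e (cz ps i)); split => //.
rewrite -(coordsK hexp x).
have -> : (fun j => ip IV x (e j)) = P.
  by apply: funext => j; apply/eqP; rewrite -subr_eq0; apply/eqP; exact: C0.
rewrite /T /P.
under eq_bigr do rewrite scaler_suml.
rewrite exchange_big /=; apply: eq_bigr => i _.
by rewrite scaler_sumr; apply: eq_bigr => j _; rewrite scalerA.
Qed.
End Rev.


Lemma forward_a (R : realType) (V W : lmodType R) (IV : inner_product V) (IW : inner_product W)
  (lam : V -> W) (Hsys : FTvN IV IW lam) x y :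
  majorized lam x y -> forall c, ip IV c x <= ip IW (lam c) (lam y).
Proof.
case: Hsys => _ A2 _.
move=> [n [a [z [a0 a1 hz ->]]]] c.
rewrite ip_sumr -[ip IW _ _]mul1r -a1 mulr_suml.
apply: ler_sum => i _; rewrite ipZr -(hz i).
by apply: ler_wpM2l.
Qed.

Lemma majorized_eq (R : realType) (V W : lmodType R) (lam : V -> W) x y :
  lam x = lam y -> majorized lam x y.
Proof.
move=> h; exists 1%N, (fun=> 1), (fun=> x); split => //.
- by rewrite big_ord1.
- by rewrite big_ord1 scale1r.
Qed.

Local Close Scope classical_set_scope.
Unset Implicit Arguments. Set Strict Implicit. Set Printing Implicit Defensive.
Local Open Scope ring_scope.

Theorem proposition8p3 (R : realType) (V W : lmodType R)
  (IV : inner_product V) (IW : inner_product W) (lam : V -> W)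
  (Hsys : FTvN IV IW lam) (x y : V) :
  [/\ (majorized lam x y ->
        forall c : V, ip IV c x <= ip IW (lam c) (lam y))
      /\ (finite_dim V ->
        (forall c : V, ip IV c x <= ip IW (lam c) (lam y)) -> majorized lam x y),
      (majorized lam x y ->
        forall c : V, ip IW (lam c) (lam x) <= ip IW (lam c) (lam y))
      /\ (finite_dim V ->
        (forall c : V, ip IW (lam c) (lam x) <= ip IW (lam c) (lam y)) ->
        majorized lam x y) &
      (majorized lam x y /\ majorized lam y x <-> lorbit lam x = lorbit lam y)].
Proof.
have fb : forall x y, majorized lam x y ->
    forall c : V, ip IW (lam c) (lam x) <= ip IW (lam c) (lam y).
  move=> x' y' hm c.
  case: (Hsys) => _ _ A3.
  have [u [hu hxu]] := A3 x' (lam c) (ex_intro _ c erefl).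
  rewrite -hu ip_sym -hxu ip_sym.
  exact: (forward_a Hsys hm).
split.
- split; first exact: forward_a.
  exact: reverse_a.
- split; first exact: fb.
  move=> fd H; apply: (reverse_a Hsys fd) => c.
  case: (Hsys) => _ A2 _.
  exact: le_trans (A2 c x) (H c).
- split.
  + move=> [hxy hyx].
    have h1 := fb _ _ hxy x.
    have h2 := fb _ _ hyx y.
    have : lam x - lam y = 0.
      apply: (@ip_eq0 _ _ IW).
      rewrite !ipBl !ipBr (ip_sym IW (lam y) (lam x)).
      rewrite (ip_sym IW (lam y) (lam x)) in h2; lra.
    move/eqP; rewrite subr_eq0 => /eqP hl.
    by rewrite /lorbit hl.
  + move=> hl.
    have hx : lorbit lam y x by rewrite -hl.
    by split; apply: majorized_eq => //; rewrite hx.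
Qed.
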